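(* Let $\mu\in(0,1/2)$ and $\varepsilon\in(0,1)$. If $u(f)$ is a solution of the Euler–Lagrange equations of the modified Lagrangian $\mathcal{L}(u,u',f)$ defined below, with initial data $u(0),u'(0)$ satisfying $u(0)\neq 0$ and $l(u(0),u'(0))=0$, then $u(f)$ is also a solution of the Euler–Lagrange equations of $\mathscr{L}(u,u',f)$ (defined below), as long as $u(f)\neq 0$.
   Context: Primes denote derivatives with respect to $f\in\mathbb{R}$. For $q\in\mathbb{R}^3\setminus\{0,(-1,0,0)\}$, $q'\in\mathbb{R}^3$, let $$\widetilde{L}(q,q',f)=\tfrac12\|q'\|^2+q_1q_2'-q_2q_1'+\frac{1}{1+\varepsilon\cos f}\Big[(1-\mu)\Big(\frac{1}{\|q+(1,0,0)\|}+q_1\Big)+\frac{\mu}{\|q\|}+\tfrac12\big(q_1^2+q_2^2-q_3^2\varepsilon\cos f\big)\Big].$$ Let $\pi:\mathbb{R}^4\to\mathbb{R}^3$, $\pi(u)=(u_1^2-u_2^2-u_3^2+u_4^2,\;2u_1u_2-2u_3u_4,\;2u_1u_3+2u_2u_4)$ (the Kustaanheimo–Stiefel map). Define $\mathscr{L}(u,u',f)=\widetilde{L}\big(\pi(u),\tfrac{\partial\pi}{\partial u}(u)u',f\big)$, the bilinear form $l(u,u')=u_4u_1'-u_3u_2'+u_2u_3'-u_1u_4'$, and the modified Lagrangian $\mathcal{L}(u,u',f)=\mathscr{L}(u,u',f)+2\,l(u,u')^2$. *)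

(* Defs.v *)
From Stdlib Require Import Reals.
From Coquelicot Require Import Coquelicot.
Open Scope R_scope.

(* Points of R^4 are represented as functions nat -> R; only the
   components 0,1,2,3 (= u_1,...,u_4 of the paper) are ever used. *)
Definition V4 := nat -> R.

Definition Lagr := V4 -> V4 -> R -> R.

(* The Lagrangian \tilde L(q,q',f) of the spatial elliptic RTBP. *)
Definition Ltilde (mu eps q1 q2 q3 p1 p2 p3 f : R) : R :=
  / 2 * (p1 ^ 2 + p2 ^ 2 + p3 ^ 2) + q1 * p2 - q2 * p1
  + / (1 + eps * cos f) *
    ((1 - mu) * (/ sqrt ((q1 + 1) ^ 2 + q2 ^ 2 + q3 ^ 2) + q1)
     + mu / sqrt (q1 ^ 2 + q2 ^ 2 + q3 ^ 2)
     + / 2 * (q1 ^ 2 + q2 ^ 2 - q3 ^ 2 * eps * cos f)).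

(* Kustaanheimo-Stiefel map pi (components, 0-indexed: u 0 = u_1, ...). *)
Definition KS1 (u : V4) := u 0%nat ^ 2 - u 1%nat ^ 2 - u 2%nat ^ 2 + u 3%nat ^ 2.
Definition KS2 (u : V4) := 2 * u 0%nat * u 1%nat - 2 * u 2%nat * u 3%nat.
Definition KS3 (u : V4) := 2 * u 0%nat * u 2%nat + 2 * u 1%nat * u 3%nat.

(* (d pi / d u)(u) v, written out componentwise. *)
Definition dKS1 (u v : V4) :=
  2 * u 0%nat * v 0%nat - 2 * u 1%nat * v 1%nat
  - 2 * u 2%nat * v 2%nat + 2 * u 3%nat * v 3%nat.
Definition dKS2 (u v : V4) :=
  2 * (v 0%nat * u 1%nat + u 0%nat * v 1%nat)
  - 2 * (v 2%nat * u 3%nat + u 2%nat * v 3%nat).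
Definition dKS3 (u v : V4) :=
  2 * (v 0%nat * u 2%nat + u 0%nat * v 2%nat)
  + 2 * (v 1%nat * u 3%nat + u 1%nat * v 3%nat).

Definition scrL (mu eps : R) : Lagr := fun u v f =>
  Ltilde mu eps (KS1 u) (KS2 u) (KS3 u) (dKS1 u v) (dKS2 u v) (dKS3 u v) f.

Definition lform (u v : V4) : R :=
  u 3%nat * v 0%nat - u 2%nat * v 1%nat + u 1%nat * v 2%nat - u 0%nat * v 3%nat.

Definition modL (mu eps : R) : Lagr := fun u v f =>
  scrL mu eps u v f + 2 * (lform u v) ^ 2.

Definition upd (v : V4) (i : nat) (x : R) : V4 :=
  fun j => if Nat.eqb j i then x else v j.

Definition dLq (L : Lagr) (i : nat) (u v : V4) (f : R) : R :=
  Derive (fun x => L (upd u i x) v f) (u i).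
Definition dLv (L : Lagr) (i : nat) (u v : V4) (f : R) : R :=
  Derive (fun x => L u (upd v i x) f) (v i).

Definition vel (u : R -> V4) (f : R) : V4 := fun j => Derive (fun s => u s j) f.

Definition EL_solution (L : Lagr) (a b : R) (u : R -> V4) : Prop :=
  forall f, a < f < b ->
    (forall j, (j < 4)%nat -> ex_derive (fun s => u s j) f) /\
    (forall i, (i < 4)%nat ->
       is_derive (fun g => dLv L i (u g) (vel u g) g) f
                 (dLq L i (u f) (vel u f) f)).

Definition nonzero4 (u : V4) : Prop :=
  ~ (u 0%nat = 0 /\ u 1%nat = 0 /\ u 2%nat = 0 /\ u 3%nat = 0).

(* Main.v *)
Require Import Defs.
From Stdlib Require Import Reals Lra Lia.
From Coquelicot Require Import Coquelicot.
Open Scope R_scope.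
From Stdlib Require Import FunctionalExtensionality.
Definition LtD (mu eps f q1 q2 q3 p1 p2 p3 dq1 dq2 dq3 dp1 dp2 dp3 : R) : R :=
  (p1 * dp1 + p2 * dp2 + p3 * dp3) + (dq1 * p2 + q1 * dp2 - dq2 * p1 - q2 * dp1)
  + / (1 + eps * cos f) *
   ((1 - mu) * (- ((q1 + 1) * dq1 + q2 * dq2 + q3 * dq3)
                 / (((q1 + 1) ^ 2 + q2 ^ 2 + q3 ^ 2) * sqrt ((q1 + 1) ^ 2 + q2 ^ 2 + q3 ^ 2)) + dq1)
    + mu * (- (q1 * dq1 + q2 * dq2 + q3 * dq3)
                 / ((q1 ^ 2 + q2 ^ 2 + q3 ^ 2) * sqrt (q1 ^ 2 + q2 ^ 2 + q3 ^ 2)))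
    + (q1 * dq1 + q2 * dq2 - q3 * dq3 * eps * cos f)).

Lemma Ltilde_derive mu eps f (q1 q2 q3 p1 p2 p3 : R -> R) x0 dq1 dq2 dq3 dp1 dp2 dp3 :
  is_derive q1 x0 dq1 -> is_derive q2 x0 dq2 -> is_derive q3 x0 dq3 ->
  is_derive p1 x0 dp1 -> is_derive p2 x0 dp2 -> is_derive p3 x0 dp3 ->
  0 < (q1 x0 + 1) ^ 2 + q2 x0 ^ 2 + q3 x0 ^ 2 ->
  0 < q1 x0 ^ 2 + q2 x0 ^ 2 + q3 x0 ^ 2 ->
  1 + eps * cos f <> 0 ->
  is_derive (fun x => Ltilde mu eps (q1 x) (q2 x) (q3 x) (p1 x) (p2 x) (p3 x) f) x0
    (LtD mu eps f (q1 x0) (q2 x0) (q3 x0) (p1 x0) (p2 x0) (p3 x0) dq1 dq2 dq3 dp1 dp2 dp3).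
Proof.
  intros H1 H2 H3 H4 H5 H6 HT HS Hc.
  unfold Ltilde.
  auto_derive.
  - repeat split; try (eexists; eassumption);
    try (eapply Rlt_le_trans; [exact HT|]; right; ring);
    try (eapply Rlt_le_trans; [exact HS|]; right; ring);
    try (apply Rgt_not_eq, sqrt_lt_R0; eapply Rlt_le_trans; [exact HT|]; right; ring);
    try (apply Rgt_not_eq, sqrt_lt_R0; eapply Rlt_le_trans; [exact HS|]; right; ring).
  - replace (Derive (fun x => p1 x) x0) with dp1 by (symmetry; apply is_derive_unique; exact H4).
    replace (Derive (fun x => p2 x) x0) with dp2 by (symmetry; apply is_derive_unique; exact H5).
    replace (Derive (fun x => p3 x) x0) with dp3 by (symmetry; apply is_derive_unique; exact H6).
    replace (Derive (fun x => q1 x) x0) with dq1 by (symmetry; apply is_derive_unique; exact H1).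
    replace (Derive (fun x => q2 x) x0) with dq2 by (symmetry; apply is_derive_unique; exact H2).
    replace (Derive (fun x => q3 x) x0) with dq3 by (symmetry; apply is_derive_unique; exact H3).
    unfold LtD.
    replace ((q1 x0 + 1) * ((q1 x0 + 1) * 1) + q2 x0 * (q2 x0 * 1) + q3 x0 * (q3 x0 * 1))
      with ((q1 x0 + 1) ^ 2 + q2 x0 ^ 2 + q3 x0 ^ 2) by ring.
    replace (q1 x0 * (q1 x0 * 1) + q2 x0 * (q2 x0 * 1) + q3 x0 * (q3 x0 * 1))
      with (q1 x0 ^ 2 + q2 x0 ^ 2 + q3 x0 ^ 2) by ring.
    assert (eT := sqrt_sqrt _ (Rlt_le _ _ HT)).
    assert (eS := sqrt_sqrt _ (Rlt_le _ _ HS)).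
    assert (nT := sqrt_lt_R0 _ HT).
    assert (nS := sqrt_lt_R0 _ HS).
    set (T := (q1 x0 + 1) ^ 2 + q2 x0 ^ 2 + q3 x0 ^ 2) in *.
    set (S := q1 x0 ^ 2 + q2 x0 ^ 2 + q3 x0 ^ 2) in *.
    set (sT := sqrt T) in *. set (sS := sqrt S) in *.
    clearbody sT sS. rewrite <- eT, <- eS. clearbody T S. subst T S.
    field. repeat split; lra.
Qed.
Definition e (i : nat) : V4 := fun j => if Nat.eqb j i then 1 else 0.

Ltac comp_tac i := destruct i as [|[|[|[|i]]]]; [ | | | | lia];
  unfold upd, e, KS1, KS2, KS3, dKS1, dKS2, dKS3, lform; cbn [Nat.eqb];
  auto_derive; auto; ring.

Lemma dq_KS (u : V4) i : (i < 4)%nat ->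
  is_derive (fun x => KS1 (upd u i x)) (u i) (dKS1 u (e i)) /\
  is_derive (fun x => KS2 (upd u i x)) (u i) (dKS2 u (e i)) /\
  is_derive (fun x => KS3 (upd u i x)) (u i) (dKS3 u (e i)) .
Proof. intros Hi; repeat match goal with |- _ /\ _ => split end; comp_tac i. Qed.

Lemma dq_dKS (u v : V4) i : (i < 4)%nat ->
  is_derive (fun x => dKS1 (upd u i x) v) (u i) (dKS1 (e i) v) /\
  is_derive (fun x => dKS2 (upd u i x) v) (u i) (dKS2 (e i) v) /\
  is_derive (fun x => dKS3 (upd u i x) v) (u i) (dKS3 (e i) v) /\
  is_derive (fun x => lform (upd u i x) v) (u i) (lform (e i) v).
Proof. intros Hi; repeat match goal with |- _ /\ _ => split end; comp_tac i. Qed.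

Lemma dv_dKS (u v : V4) i : (i < 4)%nat ->
  is_derive (fun x => dKS1 u (upd v i x)) (v i) (dKS1 u (e i)) /\
  is_derive (fun x => dKS2 u (upd v i x)) (v i) (dKS2 u (e i)) /\
  is_derive (fun x => dKS3 u (upd v i x)) (v i) (dKS3 u (e i)) /\
  is_derive (fun x => lform u (upd v i x)) (v i) (lform u (e i)).
Proof. intros Hi; repeat match goal with |- _ /\ _ => split end; comp_tac i. Qed.


Lemma upd_same (u : V4) i : upd u i (u i) = u.
Proof. apply functional_extensionality; intro j; unfold upd.
  destruct (Nat.eqb j i) eqn:E; [apply Nat.eqb_eq in E; subst|]; auto. Qed.

Definition TT (u : V4) := (KS1 u + 1) ^ 2 + KS2 u ^ 2 + KS3 u ^ 2.
Definition SS (u : V4) := KS1 u ^ 2 + KS2 u ^ 2 + KS3 u ^ 2.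

Definition FQ mu eps f u v i :=
  LtD mu eps f (KS1 u) (KS2 u) (KS3 u) (dKS1 u v) (dKS2 u v) (dKS3 u v)
    (dKS1 u (e i)) (dKS2 u (e i)) (dKS3 u (e i)) (dKS1 (e i) v) (dKS2 (e i) v) (dKS3 (e i) v)
  + 4 * lform u v * lform (e i) v.
Definition FV mu eps f u v i :=
  LtD mu eps f (KS1 u) (KS2 u) (KS3 u) (dKS1 u v) (dKS2 u v) (dKS3 u v)
    0 0 0 (dKS1 u (e i)) (dKS2 u (e i)) (dKS3 u (e i))
  + 4 * lform u v * lform u (e i).

Lemma sq_derive (g : R -> R) x dg : is_derive g x dg ->
  is_derive (fun y => 2 * g y ^ 2) x (4 * g x * dg).
Proof. intro H. assert (H2 := is_derive_scal _ _ 2 _ (is_derive_pow g 2 x dg H)).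
  replace (4 * g x * dg) with (2 * (INR 2 * dg * g x ^ Nat.pred 2)) by (simpl; ring). exact H2. Qed.

Definition GQ mu eps f u v i :=
  LtD mu eps f (KS1 u) (KS2 u) (KS3 u) (dKS1 u v) (dKS2 u v) (dKS3 u v)
    (dKS1 u (e i)) (dKS2 u (e i)) (dKS3 u (e i)) (dKS1 (e i) v) (dKS2 (e i) v) (dKS3 (e i) v).
Definition GV mu eps f u v i :=
  LtD mu eps f (KS1 u) (KS2 u) (KS3 u) (dKS1 u v) (dKS2 u v) (dKS3 u v)
    0 0 0 (dKS1 u (e i)) (dKS2 u (e i)) (dKS3 u (e i)).

Lemma dLq_scrL mu eps u v f i : (i < 4)%nat -> 0 < TT u -> 0 < SS u -> 1 + eps * cos f <> 0 ->
  is_derive (fun x => scrL mu eps (upd u i x) v f) (u i) (GQ mu eps f u v i).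
Proof.
  intros Hi HT HS Hc. destruct (dq_KS u i Hi) as [k1 [k2 k3]].
  destruct (dq_dKS u v i Hi) as [d1 [d2 [d3 dl]]].
  pose proof (Ltilde_derive mu eps f _ _ _ _ _ _ (u i) _ _ _ _ _ _ k1 k2 k3 d1 d2 d3) as H.
  cbv beta in H. rewrite !upd_same in H. apply H; assumption.
Qed.

Lemma dLv_scrL mu eps u v f i : (i < 4)%nat -> 0 < TT u -> 0 < SS u -> 1 + eps * cos f <> 0 ->
  is_derive (fun x => scrL mu eps u (upd v i x) f) (v i) (GV mu eps f u v i).
Proof.
  intros Hi HT HS Hc.
  destruct (dv_dKS u v i Hi) as [d1 [d2 [d3 dl]]].
  pose proof (Ltilde_derive mu eps f (fun _ => KS1 u) (fun _ => KS2 u) (fun _ => KS3 u) _ _ _ (v i) _ _ _ _ _ _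
      (is_derive_const _ _) (is_derive_const _ _) (is_derive_const _ _) d1 d2 d3) as H.
  cbv beta in H. rewrite !upd_same in H. apply H; assumption.
Qed.

Lemma dLq_modL mu eps u v f i : (i < 4)%nat -> 0 < TT u -> 0 < SS u -> 1 + eps * cos f <> 0 ->
  is_derive (fun x => modL mu eps (upd u i x) v f) (u i) (FQ mu eps f u v i).
Proof.
  intros Hi HT HS Hc. destruct (dq_KS u i Hi) as [k1 [k2 k3]].
  destruct (dq_dKS u v i Hi) as [d1 [d2 [d3 dl]]].
  unfold modL, FQ. apply (is_derive_plus (fun x => scrL mu eps (upd u i x) v f)(fun x => 2 * lform (upd u i x) v ^ 2)).
  - pose proof (Ltilde_derive mu eps f _ _ _ _ _ _ (u i) _ _ _ _ _ _ k1 k2 k3 d1 d2 d3) as H.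
    cbv beta in H. rewrite !upd_same in H. apply H; assumption.
  - pose proof (sq_derive _ _ _ dl) as H. cbv beta in H. rewrite !upd_same in H. exact H.
Qed.

Lemma dLv_modL mu eps u v f i : (i < 4)%nat -> 0 < TT u -> 0 < SS u -> 1 + eps * cos f <> 0 ->
  is_derive (fun x => modL mu eps u (upd v i x) f) (v i) (FV mu eps f u v i).
Proof.
  intros Hi HT HS Hc.
  destruct (dv_dKS u v i Hi) as [d1 [d2 [d3 dl]]].
  unfold modL, FV. apply (is_derive_plus (fun x => scrL mu eps u (upd v i x) f)(fun x => 2 * lform u (upd v i x) ^ 2)).
  - pose proof (Ltilde_derive mu eps f (fun _ => KS1 u) (fun _ => KS2 u) (fun _ => KS3 u) _ _ _ (v i) _ _ _ _ _ _
      (is_derive_const _ _) (is_derive_const _ _) (is_derive_const _ _) d1 d2 d3) as H.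
    cbv beta in H. rewrite !upd_same in H. apply H; assumption.
  - pose proof (sq_derive _ _ _ dl) as H. cbv beta in H. rewrite !upd_same in H. exact H.
Qed.

Lemma noether_alg mu eps f u v :
  FQ mu eps f u v 0 * u 3%nat + FQ mu eps f u v 1 * (- u 2%nat) + FQ mu eps f u v 2 * u 1%nat
  + FQ mu eps f u v 3 * (- u 0%nat)
  + FV mu eps f u v 0 * v 3%nat + FV mu eps f u v 1 * (- v 2%nat) + FV mu eps f u v 2 * v 1%nat
  + FV mu eps f u v 3 * (- v 0%nat) = 0.
Proof.
  unfold FQ, FV, LtD. unfold Rdiv.
  set (A := / (1 + eps * cos f)).
  set (B := / (((KS1 u + 1) ^ 2 + KS2 u ^ 2 + KS3 u ^ 2) * sqrt ((KS1 u + 1) ^ 2 + KS2 u ^ 2 + KS3 u ^ 2))).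
  set (C := / ((KS1 u ^ 2 + KS2 u ^ 2 + KS3 u ^ 2) * sqrt (KS1 u ^ 2 + KS2 u ^ 2 + KS3 u ^ 2))).
  clearbody A B C.
  unfold e, KS1, KS2, KS3, dKS1, dKS2, dKS3, lform; cbn [Nat.eqb].
  ring.
Qed.

Lemma charge_alg mu eps f u v :
  FV mu eps f u v 0 * u 3%nat + FV mu eps f u v 1 * (- u 2%nat) + FV mu eps f u v 2 * u 1%nat
  + FV mu eps f u v 3 * (- u 0%nat)
  = 4 * lform u v * (u 0%nat ^ 2 + u 1%nat ^ 2 + u 2%nat ^ 2 + u 3%nat ^ 2).
Proof.
  unfold FQ, FV, LtD. unfold Rdiv.
  set (A := / (1 + eps * cos f)).
  set (B := / (((KS1 u + 1) ^ 2 + KS2 u ^ 2 + KS3 u ^ 2) * sqrt ((KS1 u + 1) ^ 2 + KS2 u ^ 2 + KS3 u ^ 2))).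
  set (C := / ((KS1 u ^ 2 + KS2 u ^ 2 + KS3 u ^ 2) * sqrt (KS1 u ^ 2 + KS2 u ^ 2 + KS3 u ^ 2))).
  clearbody A B C.
  unfold e, KS1, KS2, KS3, dKS1, dKS2, dKS3, lform; cbn [Nat.eqb].
  ring.
Qed.


Lemma N_derive (D0 D1 D2 D3 U0 U1 U2 U3 : R -> R) x d0 d1 d2 d3 w0 w1 w2 w3 :
  is_derive D0 x d0 -> is_derive D1 x d1 -> is_derive D2 x d2 -> is_derive D3 x d3 ->
  is_derive U0 x w0 -> is_derive U1 x w1 -> is_derive U2 x w2 -> is_derive U3 x w3 ->
  is_derive (fun g => D0 g * U3 g + D1 g * (- U2 g) + D2 g * U1 g + D3 g * (- U0 g)) x
   (d0 * U3 x + d1 * (- U2 x) + d2 * U1 x + d3 * (- U0 x)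
    + (D0 x * w3 + D1 x * (- w2) + D2 x * w1 + D3 x * (- w0))).
Proof.
  intros H0 H1 H2 H3 K0 K1 K2 K3.
  auto_derive.
  - repeat split; eexists; eassumption.
  - replace (Derive (fun y => D0 y) x) with d0 by (symmetry; apply is_derive_unique; assumption).
    replace (Derive (fun y => D1 y) x) with d1 by (symmetry; apply is_derive_unique; assumption).
    replace (Derive (fun y => D2 y) x) with d2 by (symmetry; apply is_derive_unique; assumption).
    replace (Derive (fun y => D3 y) x) with d3 by (symmetry; apply is_derive_unique; assumption).
    replace (Derive (fun y => U0 y) x) with w0 by (symmetry; apply is_derive_unique; assumption).
    replace (Derive (fun y => U1 y) x) with w1 by (symmetry; apply is_derive_unique; assumption).
    replace (Derive (fun y => U2 y) x) with w2 by (symmetry; apply is_derive_unique; assumption).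
    replace (Derive (fun y => U3 y) x) with w3 by (symmetry; apply is_derive_unique; assumption).
    ring.
Qed.

Lemma sum_pos (w : V4) : nonzero4 w -> 0 < w 0%nat ^ 2 + w 1%nat ^ 2 + w 2%nat ^ 2 + w 3%nat ^ 2.
Proof.
  intro H. destruct (Rlt_or_le 0 (w 0%nat ^ 2 + w 1%nat ^ 2 + w 2%nat ^ 2 + w 3%nat ^ 2)) as [h|h]; auto.
  exfalso; apply H.
  pose proof (pow2_ge_0 (w 0%nat)); pose proof (pow2_ge_0 (w 1%nat));
  pose proof (pow2_ge_0 (w 2%nat)); pose proof (pow2_ge_0 (w 3%nat)).
  repeat split; apply Rsqr_eq_0; unfold Rsqr; simpl in *; lra.
Qed.

Lemma SS_pos (w : V4) : nonzero4 w -> 0 < SS w.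
Proof.
  intro H. pose proof (sum_pos w H) as h.
  replace (SS w) with ((w 0%nat ^ 2 + w 1%nat ^ 2 + w 2%nat ^ 2 + w 3%nat ^ 2) ^ 2)
    by (unfold SS, KS1, KS2, KS3; ring).
  apply pow_lt; lra.
Qed.

Lemma TT_pos (w : V4) : ~ (KS1 w = -1 /\ KS2 w = 0 /\ KS3 w = 0) -> 0 < TT w.
Proof.
  intro H. unfold TT. destruct (Rlt_or_le 0 ((KS1 w + 1) ^ 2 + KS2 w ^ 2 + KS3 w ^ 2)) as [h|h]; auto.
  exfalso; apply H.
  pose proof (pow2_ge_0 (KS1 w + 1)); pose proof (pow2_ge_0 (KS2 w));
  pose proof (pow2_ge_0 (KS3 w)).
  assert (KS1 w + 1 = 0) by (apply Rsqr_eq_0; unfold Rsqr; simpl in *; lra).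
  repeat split; try lra; apply Rsqr_eq_0; unfold Rsqr; simpl in *; lra.
Qed.

Lemma c_pos eps f : 0 < eps < 1 -> 1 + eps * cos f <> 0.
Proof. intros He. pose proof (COS_bound f) as [h1 h2]. nra. Qed.

Theorem proposition3 (mu eps : R) (a b : R) (u : R -> V4) :
  0 < mu < / 2 -> 0 < eps < 1 ->
  a < 0 < b ->
  (* u stays in the domain of the Lagrangians on (a,b) *)
  (forall f, a < f < b ->
     nonzero4 (u f) /\
     ~ (KS1 (u f) = -1 /\ KS2 (u f) = 0 /\ KS3 (u f) = 0)) ->
  EL_solution (modL mu eps) a b u ->
  lform (u 0) (vel u 0) = 0 ->
  EL_solution (scrL mu eps) a b u.
Proof.
  intros Hmu Heps Hab Hdom Hsol Hl0.
  assert (Hc : forall f, 1 + eps * cos f <> 0) by (intro; apply c_pos; auto).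
  assert (HTS : forall f, a < f < b -> 0 < TT (u f) /\ 0 < SS (u f)).
  { intros f Hf; destruct (Hdom f Hf); split; [apply TT_pos|apply SS_pos]; auto. }
  assert (HQ : forall f i, a < f < b -> (i < 4)%nat ->
    dLq (modL mu eps) i (u f) (vel u f) f = FQ mu eps f (u f) (vel u f) i).
  { intros f i Hf Hi. unfold dLq; apply is_derive_unique; apply dLq_modL; auto; apply HTS; auto. }
  assert (HV : forall f i, a < f < b -> (i < 4)%nat ->
    dLv (modL mu eps) i (u f) (vel u f) f = FV mu eps f (u f) (vel u f) i).
  { intros f i Hf Hi. unfold dLv; apply is_derive_unique; apply dLv_modL; auto; apply HTS; auto. }
  set (N := fun g => dLv (modL mu eps) 0 (u g) (vel u g) g * u g 3%nat
     + dLv (modL mu eps) 1 (u g) (vel u g) g * (- u g 2%nat)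
     + dLv (modL mu eps) 2 (u g) (vel u g) g * u g 1%nat
     + dLv (modL mu eps) 3 (u g) (vel u g) g * (- u g 0%nat)).
  assert (HN : forall g, a < g < b -> N g = 4 * lform (u g) (vel u g) *
     (u g 0%nat ^ 2 + u g 1%nat ^ 2 + u g 2%nat ^ 2 + u g 3%nat ^ 2)).
  { intros g Hg; unfold N; rewrite !HV by (auto; lia); apply charge_alg. }
  assert (HdN : forall g, a < g < b -> is_derive N g 0).
  { intros g Hg. destruct (Hsol g Hg) as [Hex Hel].
    assert (K : forall j, (j < 4)%nat -> is_derive (fun s => u s j) g (vel u g j)).
    { intros j Hj; unfold vel; apply Derive_correct; auto. }
    pose proof (N_derive _ _ _ _ (fun s => u s 0%nat) (fun s => u s 1%nat) (fun s => u s 2%nat)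
      (fun s => u s 3%nat) g _ _ _ _ _ _ _ _ (Hel 0%nat ltac:(lia)) (Hel 1%nat ltac:(lia))
      (Hel 2%nat ltac:(lia)) (Hel 3%nat ltac:(lia)) (K 0%nat ltac:(lia)) (K 1%nat ltac:(lia))
      (K 2%nat ltac:(lia)) (K 3%nat ltac:(lia))) as H.
    cbv beta in H. match type of H with is_derive _ _ ?d =>
      assert (E : d = 0) end.
    { cbv beta. rewrite !HQ, !HV by (auto; lia).
      rewrite <- (noether_alg mu eps g (u g) (vel u g)). ring. }
    rewrite E in H. exact H. }
  assert (Hconst : forall f, a < f < b -> N f = N 0).
  { intros f Hf.
    assert (Hin : forall x, Rmin 0 f <= x <= Rmax 0 f -> a < x < b).
    { intros x Hx. split.
      - apply Rlt_le_trans with (Rmin 0 f); [apply Rmin_glb_lt; lra | lra].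
      - apply Rle_lt_trans with (Rmax 0 f); [lra | apply Rmax_lub_lt; lra]. }
    destruct (MVT_gen N 0 f (fun _ => 0)) as [c [_ Hc']].
    - intros x Hx; apply HdN, Hin; lra.
    - intros x Hx. apply continuity_pt_filterlim. apply (ex_derive_continuous N x).
      eexists; apply HdN, Hin; lra.
    - lra. }
  assert (Hl : forall f, a < f < b -> lform (u f) (vel u f) = 0).
  { intros f Hf. pose proof (Hconst f Hf) as H. rewrite (HN f Hf), (HN 0 ltac:(lra)), Hl0 in H.
    pose proof (sum_pos (u f) (proj1 (Hdom f Hf))). nra. }
  intros f Hf. destruct (Hsol f Hf) as [Hex Hel]. split; auto. intros i Hi.
  assert (E1 : dLq (scrL mu eps) i (u f) (vel u f) f = dLq (modL mu eps) i (u f) (vel u f) f).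
  { rewrite HQ by auto.
    assert (G1 : dLq (scrL mu eps) i (u f) (vel u f) f = GQ mu eps f (u f) (vel u f) i).
    { unfold dLq; apply is_derive_unique; apply (dLq_scrL mu eps (u f) (vel u f) f i Hi
       (proj1 (HTS f Hf)) (proj2 (HTS f Hf)) (Hc f)). }
    rewrite G1.
    unfold FQ, GQ. rewrite (Hl f Hf). ring. }
  rewrite E1.
  apply is_derive_ext_loc with (f := fun g => dLv (modL mu eps) i (u g) (vel u g) g); [| apply Hel; auto].
  apply locally_interval with a b; simpl; try tauto.
  intros y Hy1 Hy2. assert (Hy : a < y < b) by auto.
  rewrite HV by auto.
  assert (G1 : dLv (scrL mu eps) i (u y) (vel u y) y = GV mu eps y (u y) (vel u y) i).
  { unfold dLv; apply is_derive_unique; apply (dLv_scrL mu eps (u y) (vel u y) y i Hi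
       (proj1 (HTS y Hy)) (proj2 (HTS y Hy)) (Hc y)). }
  rewrite G1.
  unfold FV, GV. rewrite (Hl y Hy). ring.
Qed.
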